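(* Let $\nu\in\mathcal P_{2,0}(\mathbb R^d)$ and $1\le m\le d$. Let $V_m$ be the set of $m$-dimensional linear subspaces of $\mathbb R^d$ and $\mathcal D_m=\{\mu\in\mathcal P_{2,0}(\mathbb R^d):\mu(E)=1\text{ for some }E\in V_m\}$. Then every maximizer of $\operatorname{Var}(\mu)$ over $\{\mu\in\mathcal D_m:\mu\preceq_K\nu\}$ is of the form $(p_E)_\#\nu$ for some $E\in V_m$, where $p_E$ is the orthogonal projection onto $E$.
   Context: $\mathcal P_{2,0}(\mathbb R^d)$: Borel probability measures with finite second moment and zero mean. $\operatorname{Var}(\mu)=\int|x-\int z\,d\mu|^2d\mu$. Kantorovich dominance: $\mu\preceq_K\nu$ iff there is a coupling $\pi$ of $\mu,\nu$ with $\int\langle x-b_\nu,y-x\rangle\,d\pi=0$, $b_\nu=\int y\,d\nu$. *)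

(* Defs.v *)
From HB Require Import structures.
From mathcomp Require Import all_boot all_order all_algebra.
From mathcomp Require Import all_classical all_reals all_analysis.
Set Implicit Arguments. Unset Strict Implicit. Unset Printing Implicit Defensive.
Import Order.TTheory GRing.Theory Num.Theory.
Import numFieldNormedType.Exports.
Local Open Scope classical_set_scope.
Local Open Scope ring_scope.

Definition Rd (R : realType) (d : nat) :=
  g_sigma_algebraType (open : set (set 'rV[R]_d)).

Definition dotv {R : realType} {d : nat} (x y : 'rV[R]_d) : R :=
  \sum_(i < d) x ord0 i * y ord0 i.
Definition sqnorm {R : realType} {d : nat} (x : 'rV[R]_d) : R := dotv x x.

Definition barycenter {R : realType} {d : nat} (mu : probability (Rd R d) R)
  : 'rV[R]_d :=
  \row_(i < d) fine (\int[mu]_(x in [set: Rd R d]) ((x : 'rV[R]_d) ord0 i)%:E)%E.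

Definition P20 {R : realType} {d : nat} (mu : probability (Rd R d) R) : Prop :=
  (\int[mu]_(x in [set: Rd R d]) (sqnorm (x : 'rV[R]_d))%:E < +oo)%E
  /\ barycenter mu = 0.

Definition Var {R : realType} {d : nat} (mu : probability (Rd R d) R) : \bar R :=
  (\int[mu]_(x in [set: Rd R d]) (sqnorm ((x : 'rV[R]_d) - barycenter mu))%:E)%E.

Definition coupling {R : realType} {d : nat}
  (mu nu : probability (Rd R d) R)
  (pi : probability (Rd R d * Rd R d)%type R) : Prop :=
  (forall A : set (Rd R d), measurable A -> pi (fst @^-1` A) = mu A) /\
  (forall A : set (Rd R d), measurable A -> pi (snd @^-1` A) = nu A).

Definition Kdom {R : realType} {d : nat} (mu nu : probability (Rd R d) R) : Prop :=
  exists pi : probability (Rd R d * Rd R d)%type R,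
    coupling mu nu pi /\
    let f := fun z : (Rd R d * Rd R d)%type =>
      dotv ((z.1 : 'rV[R]_d) - barycenter nu) ((z.2 : 'rV[R]_d) - (z.1 : 'rV[R]_d)) in
    pi.-integrable [set: (Rd R d * Rd R d)%type] (fun z => (f z)%:E) /\
    (\int[pi]_(z in [set: (Rd R d * Rd R d)%type]) (f z)%:E = 0)%E.

(* Linear subspaces of R^d are represented (mxalgebra) as row spaces of
   square matrices E : 'M_d; E is m-dimensional iff \rank E = m. *)
Definition in_subspace {R : realType} {d : nat} (E : 'M[R]_d) (x : 'rV[R]_d) : bool :=
  (x <= E)%MS.

Definition Dm {R : realType} {d : nat} (m : nat) (mu : probability (Rd R d) R) : Prop :=
  P20 mu /\ exists E : 'M[R]_d, \rank E = m /\
    mu [set x : Rd R d | in_subspace E (x : 'rV[R]_d)] = 1%E.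

Definition orth_proj {R : realType} {d : nat} (E : 'M[R]_d) (x : 'rV[R]_d) : 'rV[R]_d :=
  let B := row_base E in x *m B^T *m invmx (B *m B^T) *m B.

Definition is_pushforward {R : realType} {d : nat}
  (mu nu : probability (Rd R d) R) (f : 'rV[R]_d -> 'rV[R]_d) : Prop :=
  forall A : set (Rd R d), measurable A ->
    mu A = nu [set x : Rd R d | f (x : 'rV[R]_d) \in A].

(* Main.v *)
Require Import Defs.
From HB Require Import structures.
From mathcomp Require Import all_boot all_order all_algebra.
From mathcomp Require Import all_classical all_reals all_analysis.
From mathcomp Require Import measurable_realfun.
From mathcomp Require Import ring lra.
Import Order.TTheory GRing.Theory Num.Theory.
Import numFieldNormedType.Exports.
Local Open Scope classical_set_scope.
Local Open Scope ring_scope.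
Set Implicit Arguments. Unset Strict Implicit.
Lemma mulmx_cont (R : realType) (d : nat) (M : 'M[R]_d) :
  continuous (fun x : 'rV[R]_d => x *m M).
Proof.
move=> /= x s /(nbhs_ballP (x *m M)) [e e0 es].
pose K := \sum_k \sum_j `|M k j|.
have K0 : 0 <= K by apply: sumr_ge0 => k _; apply: sumr_ge0 => j _.
have dpos : 0 < e / (K + 1) by apply: divr_gt0 => //; rewrite ltr_wpDl.
apply/nbhs_ballP; exists (e / (K + 1)) => //= y [_ xy]; apply: es.
split => // i j.
rewrite /ball /= !mxE -sumrB.
have h : `|\sum_k (x i k * M k j - y i k * M k j)| <= e / (K + 1) * K.
  apply: le_trans (ler_norm_sum _ _ _) _.
  rewrite /K mulr_sumr; apply: ler_sum => k _.
  rewrite -mulrBl normrM.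
  apply: le_trans (_ : e / (K + 1) * `|M k j| <= _).
    apply: ler_wpM2r => //. by move: (xy i k); rewrite /ball /= => /ltW.
  apply: ler_wpM2l; first exact: ltW.
  rewrite (bigD1 j) //= ler_wpDr //. by apply: sumr_ge0.
apply: le_lt_trans h _.
rewrite -mulrA gtr_pMr // ltr_pdivrMl ?mulr1 ?ltrDl //.
by rewrite ltr_wpDl.
Qed.
Lemma mcont (R : realType) (d : nat) (g : 'rV[R]_d -> R) :
  continuous g -> measurable_fun [set: Rd R d] (g : Rd R d -> R).
Proof.
move=> /continuousP cg.
apply: (measurability _ (RGenOpens.measurableE R)).
move=> _ [_ [a [b ->]] <-].
apply: measurableI => //.
apply: sub_sigma_algebra.
apply: cg. exact: interval_open.
Qed.

Lemma mP (R : realType) (d : nat) (M : 'M[R]_d) :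
  measurable_fun [set: Rd R d] (fun x : Rd R d => (x *m M : Rd R d)).
Proof.
have /continuousP cg := @mulmx_cont _ _ M.
have hG : @measurable _ (Rd R d) = <<s (open : set (set 'rV[R]_d)) >> by [].
apply: (measurability _ hG) => //.
move=> _ [U oU <-]; apply: measurableI => //.
apply: sub_sigma_algebra; exact: cg.
Qed.

Definition mrow (R : realType) (d : nat) d0 (X : measurableType d0) (g : X -> 'rV[R]_d) :=
  forall i, measurable_fun [set: X] (fun x => g x ord0 i).

Lemma mrow_id (R : realType) (d : nat) : mrow (fun x : Rd R d => (x : 'rV[R]_d)).
Proof. move=> i; apply: mcont; exact: coord_continuous. Qed.

Lemma mrow_fst (R : realType) (d : nat) :
  mrow (fun z : (Rd R d * Rd R d)%type => (z.1 : 'rV[R]_d)).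
Proof. move=> i; apply: measurableT_comp (mrow_id i) measurable_fst. Qed.

Lemma mrow_snd (R : realType) (d : nat) :
  mrow (fun z : (Rd R d * Rd R d)%type => (z.2 : 'rV[R]_d)).
Proof. move=> i; apply: measurableT_comp (mrow_id i) measurable_snd. Qed.

Lemma mrowB (R : realType) (d : nat) d0 (X : measurableType d0) (g h : X -> 'rV[R]_d) :
  mrow g -> mrow h -> mrow (fun x => g x - h x).
Proof.
move=> mg mh i.
rewrite (_ : (fun x => (g x - h x) ord0 i) = (fun x => g x ord0 i) \- (fun x => h x ord0 i)); last by apply/funext => x; rewrite !mxE.
exact: (measurable_funB (mg i) (mh i)).
Qed.

Lemma mrowM (R : realType) (d : nat) d0 (X : measurableType d0) (g : X -> 'rV[R]_d) (M : 'M[R]_d) :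
  mrow g -> mrow (fun x => g x *m M).
Proof.
move=> mg i.
rewrite (_ : (fun x => (g x *m M) ord0 i) = (fun x => \sum_k (g x ord0 k * M k i))); last by apply/funext => x; rewrite !mxE.
apply: measurable_sum => k.
exact: (measurable_funM (mg k) (measurable_cst _)).
Qed.

Lemma mdot (R : realType) (d : nat) d0 (X : measurableType d0) (g h : X -> 'rV[R]_d) :
  mrow g -> mrow h -> measurable_fun [set: X] (fun x => dotv (g x) (h x)).
Proof.
move=> mg mh; rewrite /dotv.
apply: measurable_sum => k.
exact: (measurable_funM (mg k) (mh k)).
Qed.
Section LinAlg.
Variables (R : realType) (d : nat).
Implicit Types (x y z : 'rV[R]_d).

Lemma dotvE x y : dotv x y = (x *m y^T) ord0 ord0.
Proof. by rewrite /dotv !mxE; apply: eq_bigr => i _; rewrite mxE. Qed.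

Lemma dotvC x y : dotv x y = dotv y x.
Proof. by rewrite /dotv; apply: eq_bigr => i _; rewrite mulrC. Qed.

Lemma dotvBr x y z : dotv x (y - z) = dotv x y - dotv x z.
Proof. by rewrite /dotv -sumrB; apply: eq_bigr => i _; rewrite !mxE mulrBr. Qed.

Lemma dotvBl x y z : dotv (y - z) x = dotv y x - dotv z x.
Proof. by rewrite dotvC dotvBr !(dotvC x). Qed.

Lemma sqnorm_ge0 x : 0 <= sqnorm x.
Proof. by apply: sumr_ge0 => i _; rewrite -expr2 sqr_ge0. Qed.

Lemma sqnorm_eq0 x : sqnorm x = 0 -> x = 0.
Proof.
move=> h; apply/rowP => i; rewrite mxE.
have := @psumr_eq0P R _ predT (fun i => x ord0 i * x ord0 i).
move=> /(_ (fun i _ => ltac:(by rewrite -expr2 sqr_ge0)) h i isT) /eqP.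
by rewrite mulf_eq0 orbb => /eqP.
Qed.

Lemma sqnormB x y : sqnorm (x - y) = sqnorm x - 2 * dotv x y + sqnorm y.
Proof.
rewrite /sqnorm dotvBr !dotvBl (dotvC y x); lra.
Qed.

Lemma sqnormD x y : sqnorm (x + y) = sqnorm x + 2 * dotv x y + sqnorm y.
Proof.
have -> : x + y = x - (- y) by rewrite opprK.
rewrite sqnormB.
have -> : dotv x (- y) = - dotv x y.
  by rewrite /dotv -sumrN; apply: eq_bigr => i _; rewrite mxE mulrN.
have -> : sqnorm (- y) = sqnorm y.
  by rewrite /sqnorm /dotv; apply: eq_bigr => i _; rewrite mxE mulrNN.
lra.
Qed.

Lemma dotv_abs x y : `|dotv x y| <= sqnorm x + sqnorm y.
Proof.
have h1 := sqnorm_ge0 (x - y); have h2 := sqnorm_ge0 (x + y).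
rewrite sqnormB in h1; rewrite sqnormD in h2.
have hx := sqnorm_ge0 x; have hy := sqnorm_ge0 y.
rewrite ler_norml; apply/andP; split; lra.
Qed.

Lemma coord_sq x i : x ord0 i ^+ 2 <= sqnorm x.
Proof.
rewrite /sqnorm /dotv (bigD1 i) //= -expr2 lerDl.
by apply: sumr_ge0 => j _; rewrite -expr2 sqr_ge0.
Qed.

Lemma coord_abs x i : `|x ord0 i| <= 1 + sqnorm x.
Proof.
have h := coord_sq x i.
have : `|x ord0 i| <= 1 + x ord0 i ^+ 2.
  have [h0|h0] := leP 1 `|x ord0 i|.
    rewrite -real_normK ?num_real //; nra.
  have := normr_ge0 (x ord0 i); rewrite -real_normK ?num_real //; nra.
lra.
Qed.

Definition PM (E : 'M[R]_d) : 'M[R]_d :=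
  let B := row_base E in B^T *m invmx (B *m B^T) *m B.

Lemma orth_projE E x : orth_proj E x = x *m PM E.
Proof. by rewrite /orth_proj /PM !mulmxA. Qed.

Lemma BBt_unit (E : 'M[R]_d) : (row_base E *m (row_base E)^T) \in unitmx.
Proof.
rewrite -row_free_unit; apply: inj_row_free => v hv.
have : sqnorm (v *m row_base E) = 0.
  rewrite /sqnorm dotvE trmx_mul mulmxA.
  by rewrite -(mulmxA v) hv mul0mx mxE.
move/sqnorm_eq0 => h.
by apply: (row_free_inj (row_base_free E)); rewrite h mul0mx.
Qed.

Lemma PM_sym E : (PM E)^T = PM E.
Proof.
rewrite /PM; set B := row_base E; clearbody B.
by rewrite !trmx_mul trmxK trmx_inv trmx_mul trmxK !mulmxA.
Qed.

Lemma PM_fix E x : (x <= E)%MS -> x *m PM E = x.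
Proof.
rewrite -(eq_row_base E) => /submxP [D ->].
have hu := BBt_unit E.
rewrite /PM; set B := row_base E in hu *; clearbody B.
by rewrite !mulmxA -(mulmxA D B) -(mulmxA D) (mulmxV hu) mulmx1.
Qed.

Lemma PM_in E x : (x *m PM E <= E)%MS.
Proof.
have hB : (row_base E <= E)%MS by rewrite eq_row_base.
rewrite /PM; set B := row_base E in hB *; clearbody B.
rewrite !mulmxA; exact: (submx_trans (submxMl _ _) hB).
Qed.

Lemma PM_idem E : PM E *m PM E = PM E.
Proof.
have hu := BBt_unit E.
rewrite /PM; set B := row_base E in hu *; clearbody B.
by rewrite !mulmxA -(mulmxA _ B) -(mulmxA _ (B *m B^T)) (mulmxV hu) mulmx1.
Qed.

Lemma dotv_sym E x y : dotv (x *m PM E) y = dotv x (y *m PM E).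
Proof.
by rewrite !dotvE trmx_mul PM_sym !mulmxA.
Qed.

Lemma PM_orth E y : dotv (y *m PM E) (y - y *m PM E) = 0.
Proof.
rewrite dotvBr dotv_sym [dotv (y *m PM E) (y *m PM E)]dotv_sym -mulmxA PM_idem.
by rewrite subrr.
Qed.

Lemma sqnorm_PM E y : sqnorm y = sqnorm (y *m PM E) + sqnorm (y - y *m PM E).
Proof.
have h0 : dotv (y *m PM E) (y - y *m PM E) = 0.
  rewrite dotvBr dotv_sym [dotv (y *m PM E) (y *m PM E)]dotv_sym -mulmxA PM_idem.
  by rewrite subrr.
have := sqnormD (y *m PM E) (y - y *m PM E).
rewrite h0 mulr0 addr0 => <-.
by rewrite addrC subrK.
Qed.

Lemma sqnorm_PM_le E y : sqnorm (y *m PM E) <= sqnorm y.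
Proof. by rewrite [leRHS](sqnorm_PM E) lerDl sqnorm_ge0. Qed.

End LinAlg.
Section Transfer.
Variable R : realType.
Local Open Scope ereal_scope.

Lemma TL_ge0 d1 d2 (X : measurableType d1) (Y : measurableType d2)
  (P : probability X R) (mu2 : {measure set Y -> \bar R}) (h : X -> Y)
  (mh : measurable_fun setT h)
  (hp : forall A, measurable A -> P (h @^-1` A) = mu2 A)
  (g : Y -> \bar R) (mg : measurable_fun setT g) (g0 : forall y, 0 <= g y) :
  \int[mu2]_y g y = \int[P]_x g (h x).
Proof.
pose hm : {mfun X >-> Y} :=
  MeasurableFun.Pack (MeasurableFun.Class (isMeasurableFun.Build _ _ _ _ _ mh)).
rewrite (eq_measure_integral (distribution P hm)); last first.
  by move=> A mA _; rewrite -hp.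
by rewrite ge0_integral_distribution.
Qed.

Lemma TL d1 d2 (X : measurableType d1) (Y : measurableType d2)
  (P : probability X R) (mu2 : {measure set Y -> \bar R}) (h : X -> Y)
  (mh : measurable_fun setT h)
  (hp : forall A, measurable A -> P (h @^-1` A) = mu2 A)
  (g : Y -> \bar R) (mg : measurable_fun setT g)
  (ig : P.-integrable setT (g \o h)) :
  \int[mu2]_y g y = \int[P]_x g (h x).
Proof.
pose hm : {mfun X >-> Y} :=
  MeasurableFun.Pack (MeasurableFun.Class (isMeasurableFun.Build _ _ _ _ _ mh)).
rewrite (eq_measure_integral (distribution P hm)); last first.
  by move=> A mA _; rewrite -hp.
by rewrite integral_distribution.
Qed.

Lemma int_ge0 d1 (X : measurableType d1) (mu : {measure set X -> \bar R})
  (u : X -> R) : measurable_fun setT u -> (forall x, (0 <= u x)%R) ->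
  \int[mu]_x (u x)%:E < +oo -> mu.-integrable setT (fun x => (u x)%:E).
Proof.
move=> mu0 u0 hf; apply/integrableP; split.
  exact/measurable_EFinP.
under eq_integral do rewrite gee0_abs ?lee_fin ?u0 //.
by [].
Qed.

End Transfer.
Section Lin.
Variable R : realType.
Local Open Scope ereal_scope.

Lemma int_lin d1 (X : measurableType d1) (mu : {measure set X -> \bar R})
  (f g : X -> R) (a b : R) :
  mu.-integrable setT (fun x => (f x)%:E) -> mu.-integrable setT (fun x => (g x)%:E) ->
  mu.-integrable setT (fun x => (a * f x + b * g x)%R%:E) /\
  \int[mu]_x (a * f x + b * g x)%R%:E =
    (a * fine (\int[mu]_x (f x)%:E) + b * fine (\int[mu]_x (g x)%:E))%R%:E.
Proof.
move=> hf hg.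
have e : (fun x => (a * f x + b * g x)%R%:E) =
    (fun x => a%:E * (f x)%:E + b%:E * (g x)%:E).
  by apply/funext => x; rewrite EFinD !EFinM.
have ia := integrableZl measurableT a hf.
have ib := integrableZl measurableT b hg.
rewrite e; split; first exact: integrableD.
rewrite integralD // !integralZl // EFinD !EFinM !fineK //;
  exact: integrable_fin_num.
Qed.

Lemma null_eq d1 (X : measurableType d1) (mu : {measure set X -> \bar R})
  (X1 X2 N : set X) : measurable X1 -> measurable X2 -> measurable N ->
  mu N = 0 -> (forall z, ~ N z -> (X1 z <-> X2 z)) -> mu X1 = mu X2.
Proof.
move=> m1 m2 mN N0 h.
rewrite (measureDI mu m1 mN) (measureDI mu m2 mN).
congr (_ + _).
  congr (mu _); apply/seteqP; split => z [hz nz]; split => //; by apply/(h z nz).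
apply: (@etrans _ _ 0).
  by apply: (subset_measure0 _ _ _ N0) => //; first [exact: measurableI | apply: subIsetr].
apply/esym.
by apply: (subset_measure0 _ _ _ N0) => //; first [exact: measurableI | apply: subIsetr].
Qed.

End Lin.
Unset Implicit Arguments.
Theorem mainTheorem16 (R : realType) (d m : nat)
  (nu : probability (Rd R d) R) (hnu : P20 nu)
  (hm1 : (1 <= m)%N) (hmd : (m <= d)%N)
  (mu : probability (Rd R d) R)
  (hmuD : Dm m mu) (hmuK : Kdom mu nu)
  (hmax : forall mu' : probability (Rd R d) R,
      Dm m mu' -> Kdom mu' nu -> (Var mu' <= Var mu)%E) :
  exists E : 'M[R]_d, \rank E = m /\ is_pushforward mu nu (orth_proj E).
Proof.
have bnu : barycenter nu = 0 := hnu.2.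
case: hmuD => hmu [E [rkE muS]].
exists E; split => //.
case: hmuK => pi [[c1 c2]].
rewrite /= bnu => -[intf intf0].
set P := PM E.
pose S := [set x : Rd R d | in_subspace E (x : 'rV[R]_d)].
have mS : measurable S.
  have -> : S = (fun x : Rd R d => dotv ((x : 'rV_d) *m cokermx E) ((x : 'rV_d) *m cokermx E)) @^-1` [set 0%R].
    apply/seteqP; split => x /=; rewrite /S /= /in_subspace submxE.
    - by move/eqP => ->; rewrite /dotv big1 // => i _; rewrite mxE mul0r.
    - by move/sqnorm_eq0 => ->.
  rewrite -[X in measurable X]setTI.
  have mf := mdot (mrowM (cokermx E) (@mrow_id R d)) (mrowM (cokermx E) (@mrow_id R d)).
  exact: (mf measurableT [set 0%R] (measurable_set1 0%R)).
have piN1 : pi (fst @^-1` (~` S)) = 0%E.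
  rewrite c1; last exact: measurableC.
  by rewrite probability_setC // muS -EFinB subrr.
pose T2 := (Rd R d * Rd R d)%type.
have mf1 := @mrow_fst R d.
have mf2 := @mrow_snd R d.
have mid := @mrow_id R d.
have m1 : measurable_fun [set: T2] (fun z : T2 => sqnorm (z.1 : 'rV_d)) := mdot mf1 mf1.
have m2 : measurable_fun [set: T2] (fun z : T2 => sqnorm ((z.2 : 'rV_d) *m P)) :=
  mdot (mrowM P mf2) (mrowM P mf2).
have m3 : measurable_fun [set: T2] (fun z : T2 => sqnorm (z.2 : 'rV_d)) := mdot mf2 mf2.
have mw : measurable_fun [set: T2] (fun z : T2 => dotv (z.1 : 'rV_d) (z.2 : 'rV_d)) := mdot mf1 mf2.
have mn : measurable_fun [set: Rd R d] (fun x : Rd R d => (sqnorm (x : 'rV_d))%:E).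
  exact: (proj2 (measurable_EFinP _ _) (mdot mid mid)).
have e1 : (\int[pi]_z (sqnorm (z.1 : 'rV_d))%:E = \int[mu]_x (sqnorm (x : 'rV_d))%:E)%E.
  by rewrite (TL_ge0 (P := pi) (h := fst) measurable_fst c1 mn) // => x; rewrite lee_fin sqnorm_ge0.
have e3 : (\int[pi]_z (sqnorm (z.2 : 'rV_d))%:E = \int[nu]_x (sqnorm (x : 'rV_d))%:E)%E.
  by rewrite (TL_ge0 (P := pi) (h := snd) measurable_snd c2 mn) // => x; rewrite lee_fin sqnorm_ge0.
have i1 : pi.-integrable setT (fun z : T2 => (sqnorm (z.1 : 'rV_d))%:E).
  apply: int_ge0 => //; first by move=> z; exact: sqnorm_ge0.
  by rewrite e1; exact: hmu.1.
have i3 : pi.-integrable setT (fun z : T2 => (sqnorm (z.2 : 'rV_d))%:E).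
  apply: int_ge0 => //; first by move=> z; exact: sqnorm_ge0.
  by rewrite e3; exact: hnu.1.
have i2 : pi.-integrable setT (fun z : T2 => (sqnorm ((z.2 : 'rV_d) *m P))%:E).
  apply: (le_integrable measurableT _ _ i3); first exact: (proj2 (measurable_EFinP _ _) m2).
  move=> z _; rewrite !gee0_abs ?lee_fin ?sqnorm_ge0 //; exact: sqnorm_PM_le.
have iw : pi.-integrable setT (fun z : T2 => (dotv (z.1 : 'rV_d) (z.2 : 'rV_d))%:E).
  have [i13 _] := int_lin 1 1 i1 i3.
  apply: (le_integrable measurableT _ _ i13); first exact: (proj2 (measurable_EFinP _ _) mw).
  move=> z _; rewrite /= lee_fin !mul1r.
  apply: le_trans (dotv_abs _ _) _; exact: ler_norm.
have hCA : fine (\int[pi]_z (dotv (z.1 : 'rV_d) (z.2 : 'rV_d))%:E)%E =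
    fine (\int[pi]_z (sqnorm (z.1 : 'rV_d))%:E)%E.
  have [_ e] := int_lin 1 (-1) iw i1.
  have : (\int[pi]_z (1 * dotv (z.1 : 'rV_d) (z.2 : 'rV_d) + -1 * sqnorm (z.1 : 'rV_d))%:E = 0)%E.
    rewrite -intf0; apply: eq_integral => z _; congr EFin.
    rewrite subr0 dotvBr /sqnorm; lra.
  by rewrite e => /(congr1 fine); rewrite /= => h; lra.
have VarE : Var mu = (\int[pi]_z (sqnorm (z.1 : 'rV_d))%:E)%E.
  rewrite e1 /Var hmu.2; apply: eq_integral => x _; by rewrite subr0.
have mPf : measurable_fun [set: Rd R d] (fun x : Rd R d => ((x : 'rV_d) *m P : Rd R d)) := mP P.
pose Pm : {mfun Rd R d >-> Rd R d} :=
  MeasurableFun.Pack (MeasurableFun.Class (isMeasurableFun.Build _ _ _ _ _ mPf)).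
pose mu' := distribution nu Pm.
have hpP : forall A, measurable A -> nu (Pm @^-1` A) = mu' A by [].
have inu3 : nu.-integrable setT (fun x : Rd R d => (sqnorm (x : 'rV_d))%:E).
  apply: int_ge0; [exact: (mdot mid mid)|exact: sqnorm_ge0|exact: hnu.1].
have inu1 : nu.-integrable setT (fun x : Rd R d => (1%R)%:E).
  apply: int_ge0 => //.
  have -> : (\int[nu]_x (1%R)%:E = 1 * nu setT)%E by rewrite -integral_cst.
  by rewrite probability_setT mule1 ltry.
have [i13nu _] := int_lin 1 1 inu1 inu3.
have iPj j : nu.-integrable setT (fun x : Rd R d => (((x : 'rV_d) *m P) ord0 j)%:E).
  apply: (le_integrable measurableT _ _ i13nu).
    exact: (proj2 (measurable_EFinP _ _) (mrowM P mid j)).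
  move=> x _; rewrite /= lee_fin !mul1r; apply: le_trans (coord_abs _ _) _.
  apply: le_trans (_ : 1 + sqnorm (x : 'rV_d) <= _); last exact: ler_norm.
  by rewrite lerD2l sqnorm_PM_le.
have iyj j : nu.-integrable setT (fun x : Rd R d => ((x : 'rV_d) ord0 j)%:E).
  apply: (le_integrable measurableT _ _ i13nu).
    exact: (proj2 (measurable_EFinP _ _) (mid j)).
  move=> x _; rewrite /= lee_fin !mul1r; apply: le_trans (coord_abs _ _) _.
  exact: ler_norm.
have zyj j : (\int[nu]_x ((x : 'rV_d) ord0 j)%:E = 0)%E.
  have := congr1 (fun v : 'rV[R]_d => v ord0 j) bnu; rewrite /= !mxE => h.
  by rewrite -(fineK (integrable_fin_num measurableT (iyj j))) h.
have bmu' : barycenter mu' = 0.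
  apply/rowP => j; rewrite !mxE.
  rewrite (TL (P := nu) (h := Pm) mPf hpP (proj2 (measurable_EFinP _ _) (mid j)) (iPj j)).
  have -> : (\int[nu]_x ((Pm x : 'rV_d) ord0 j)%:E =
      \sum_(i < d) \int[nu]_x ((P i j)%:E * ((x : 'rV_d) ord0 i)%:E))%E.
    rewrite -integral_sum; last by move=> i; apply: integrableZl.
    apply: eq_integral => x _; rewrite /= mxE -sumEFin.
    by apply: eq_bigr => i _; rewrite -EFinM mulrC.
  all: try exact: measurableT.
  rewrite big1 // => i _.
  by rewrite integralZl // zyj mule0.
have mnP : measurable_fun [set: Rd R d]
    (fun x : Rd R d => (sqnorm ((x : 'rV_d) *m P))%:E).
  exact: (proj2 (measurable_EFinP _ _) (mdot (mrowM P mid) (mrowM P mid))).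
have eP : (\int[mu']_x (sqnorm (x : 'rV_d))%:E = \int[nu]_x (sqnorm ((x : 'rV_d) *m P))%:E)%E.
  by rewrite (TL_ge0 (P := nu) (h := Pm) mPf hpP mn) // => x; rewrite lee_fin sqnorm_ge0.
have Dmu' : Dm m mu'.
  split; first split.
  - rewrite eP; apply: le_lt_trans hnu.1.
    apply: ge0_le_integral => //.
    + by move=> x _; rewrite lee_fin sqnorm_ge0.
    + by move=> x _; rewrite lee_fin sqnorm_PM_le.
  - exact: bmu'.
  exists E; split => //.
  change (nu (Pm @^-1` S) = 1%E).
  have -> : Pm @^-1` S = setT.
    by apply/seteqP; split => // y _; rewrite /S /= /in_subspace; exact: PM_in.
  exact: probability_setT.
have mH : measurable_fun [set: Rd R d]
    (fun y : Rd R d => (((y : 'rV_d) *m P : Rd R d), y)).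
  exact: (@measurable_fun_pair _ _ _ _ _ _ _ (fun y : Rd R d => y) mPf (@measurable_id _ _ setT)).
pose Hm : {mfun Rd R d >-> T2} :=
  MeasurableFun.Pack (MeasurableFun.Class (isMeasurableFun.Build _ _ _ _ _ mH)).
pose pi' := distribution nu Hm.
have hpH : forall A, measurable A -> nu (Hm @^-1` A) = pi' A by [].
have mfK : measurable_fun [set: T2]
    (fun z : T2 => (dotv (z.1 : 'rV_d) ((z.2 : 'rV_d) - z.1))%:E).
  exact: (proj2 (measurable_EFinP _ _) (mdot mf1 (mrowB mf2 mf1))).
have Kmu' : Kdom mu' nu.
  exists pi'; split; first by split.
  rewrite /= bnu.
  have e0 : (fun z : T2 => (dotv ((z.1 : 'rV_d) - 0) ((z.2 : 'rV_d) - z.1))%:E) =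
      (fun z : T2 => (dotv (z.1 : 'rV_d) ((z.2 : 'rV_d) - z.1))%:E).
    by apply/funext => z; rewrite subr0.
  rewrite e0.
  have fH : forall y : Rd R d, dotv ((Hm y).1 : 'rV_d) ((Hm y).2 - (Hm y).1) = 0.
    move=> y; exact: PM_orth.
  have i0 : nu.-integrable setT
      ((fun z : T2 => (dotv (z.1 : 'rV_d) ((z.2 : 'rV_d) - z.1))%:E) \o Hm).
    apply: (eq_integrable measurableT (cst 0%E)); last exact: integrable0.
    by move=> y _; rewrite /= fH.
  split.
    apply/integrableP; split => //.
    rewrite (TL_ge0 (P := nu) (h := Hm) mH hpH); last 2 first.
    - exact: measurableT_comp.
    - by move=> z.
    under eq_integral do rewrite /= fH normr0.
    by rewrite integral0 ltry.
  rewrite (TL (P := nu) (h := Hm) mH hpH mfK i0).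
  under eq_integral do rewrite /= fH.
  by rewrite integral0.
have VarE' : Var mu' = (\int[pi]_z (sqnorm ((z.2 : 'rV_d) *m P))%:E)%E.
  rewrite /Var bmu'.
  under eq_integral do rewrite subr0.
  rewrite eP (TL_ge0 (P := pi) (h := snd) measurable_snd c2 mnP) //.
  by move=> x; rewrite lee_fin sqnorm_ge0.
have := hmax mu' Dmu' Kmu'.
rewrite VarE VarE'.
rewrite -(fineK (integrable_fin_num measurableT i1)).
rewrite -(fineK (integrable_fin_num measurableT i2)) lee_fin => hba.
have [ih1 eh1] := int_lin 1 (-2) i1 iw.
have [ih2 eh2] := int_lin 1 1 ih1 i2.
rewrite eh1 /= in eh2.
have mgg : measurable_fun [set: T2]
    (fun z : T2 => (sqnorm ((z.1 : 'rV_d) - (z.2 : 'rV_d) *m P))%:E).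
  exact: (proj2 (measurable_EFinP _ _)
    (mdot (mrowB mf1 (mrowM P mf2)) (mrowB mf1 (mrowM P mf2)))).
have egg : (\int[pi]_z (sqnorm ((z.1 : 'rV_d) - (z.2 : 'rV_d) *m P))%:E = 0)%E.
  apply/eqP; rewrite eq_le; apply/andP; split; last first.
    by apply: integral_ge0 => z _; rewrite lee_fin sqnorm_ge0.
  rewrite (ae_eq_integral _ _ measurableT mgg (measurable_int _ ih2)).
    rewrite eh2 lee_fin hCA; lra.
  exists (fst @^-1` (~` S)); split => //.
    rewrite -[X in measurable X]setTI.
    by apply: measurable_fst => //; exact: measurableC.
  move=> z /= hz; apply: contrapT => hS; apply: hz => _.
  have hS1 : S z.1 := contrapT hS.
  have fix1 : (z.1 : 'rV_d) *m P = z.1 := PM_fix hS1.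
  congr EFin; rewrite sqnormB -dotv_sym fix1; lra.
have [N [mN N0 hN]] : ae_eq pi setT
    (fun z : T2 => (sqnorm ((z.1 : 'rV_d) - (z.2 : 'rV_d) *m P))%:E) (cst 0%E).
  apply/(ae_eq_integral_abs pi measurableT mgg).
  rewrite -egg; apply: eq_integral => z _.
  by rewrite gee0_abs // lee_fin sqnorm_ge0.
move=> A mA.
have eA : [set x : Rd R d | orth_proj E x \in A] = Pm @^-1` A.
  by apply/seteqP; split => x /=; rewrite orth_projE inE.
have mA' : measurable [set x : Rd R d | orth_proj E x \in A].
  rewrite eA -[X in measurable X]setTI; exact: (mPf measurableT A mA).
rewrite -c1 // -c2 //.
apply: (null_eq _ _ mN N0).
- rewrite -[X in measurable X]setTI; by apply: measurable_fst.
- rewrite -[X in measurable X]setTI; by apply: measurable_snd.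
move=> z nz.
have gz : (sqnorm ((z.1 : 'rV_d) - (z.2 : 'rV_d) *m P))%:E = 0%E.
  apply: contrapT => hne; apply: nz; apply: hN => /= h; apply: hne; exact: (h I).
case: gz => /sqnorm_eq0 /eqP; rewrite subr_eq0 => /eqP ez.
by rewrite /= orth_projE inE -ez.
Qed.
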